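(* For any $x,y\in\mathbb{R}^d$, $$\|x\odot\texttt{FLT}_\alpha(x)\|_1-\|x\odot\texttt{FLT}_\alpha(y)\|_1\le2\|x-y\|_1.$$
   Context: The coordinates of $\mathbb{R}^d$ are partitioned into $B$ blocks of sizes $d_1,\dots,d_B$ with $\sum_kd_k=d$; write $z=(z^{(1)},\dots,z^{(B)})$, $z^{(k)}\in\mathbb{R}^{d_k}$. Fix $\alpha\%\in(0,1]$. The top-$\alpha\%$ filter $\texttt{FLT}_\alpha(z)\in\{0,1\}^d$ is defined blockwise: in block $k$ it equals $1$ exactly on a set $S_k$ of $\lceil d_k\cdot\alpha\%\rceil$ indices whose absolute values $|z^{(k)}_i|$ rank within the top-$\alpha\%$ of the block (ties broken in favour of smaller indices), and $0$ elsewhere. $\odot$ is the entrywise product. *)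

(* Defs.v *)
From HB Require Import structures.
From mathcomp Require Import all_boot all_order all_algebra.
Set Implicit Arguments. Unset Strict Implicit. Unset Printing Implicit Defensive.
Import Order.TTheory GRing.Theory Num.Theory.
Local Open Scope ring_scope.

(* Coordinates of R^d, partitioned into B blocks of sizes d k (k : 'I_B):
   a coordinate is a pair (k, i) with i : 'I_(d k); so d = \sum_k d k. *)
Notation bcoord d := {k : 'I__ & 'I_(d k)}.

Definition block (R : Type) B (d : 'I_B -> nat) (z : bcoord d -> R) (k : 'I_B)
  : 'I_(d k) -> R := fun i => z (Tagged (fun k => 'I_(d k)) i).

Arguments block [R B d] z k _.

Definition ranked_before (R : numDomainType) n (v : 'I_n -> R) (j i : 'I_n) : bool :=
  (`|v i| < `|v j|) || ((`|v j| == `|v i|) && (j < i)%N).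

(* rank of i in the block (0 = largest). *)
Definition rank (R : numDomainType) n (v : 'I_n -> R) (i : 'I_n) : nat :=
  #|[set j | ranked_before v j i]|.

Definition nkeep (R : archiRealFieldType) (alpha : R) (n : nat) : nat :=
  `|Num.ceil (n%:R * alpha)|%N.

Definition FLT (R : archiRealFieldType) (alpha : R) B (d : 'I_B -> nat)
  (z : bcoord d -> R) : bcoord d -> R :=
  fun p => ((rank (block z (tag p)) (tagged p) < nkeep alpha (d (tag p)))%N : bool)%:R.

Definition hadamard (R : ringType) B (d : 'I_B -> nat) (x y : bcoord d -> R)
  : bcoord d -> R := fun p => x p * y p.

Definition norm1 (R : numDomainType) B (d : 'I_B -> nat) (x : bcoord d -> R) : R :=
  \sum_(p : bcoord d) `|x p|.

(* Main.v *)
Require Import Defs.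
From HB Require Import structures.
From mathcomp Require Import all_boot all_order all_algebra.
From mathcomp Require Import lra.
Import Order.TTheory GRing.Theory Num.Theory.
Local Open Scope ring_scope.

Set Implicit Arguments. Unset Strict Implicit.
Section S.
Variable R : archiRealFieldType.

Lemma rb_trans n (v : 'I_n -> R) l j i :
  ranked_before v l j -> ranked_before v j i -> ranked_before v l i.
Proof.
rewrite /ranked_before => /orP[h1|/andP[/eqP e1 h1]] /orP[h2|/andP[/eqP e2 h2]].
- by rewrite (lt_trans h2 h1).
- by rewrite -e2 h1.
- by rewrite e1 h2.
- by rewrite e1 e2 eqxx (ltn_trans h1 h2) orbT.
Qed.

Lemma rb_irr n (v : 'I_n -> R) i : ~~ ranked_before v i i.
Proof. by rewrite /ranked_before ltxx ltnn andbF. Qed.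

Lemma rank_lt n (v : 'I_n -> R) j i : ranked_before v j i -> (rank v j < rank v i)%N.
Proof.
move=> hji; rewrite /rank; apply: proper_card; apply/properP; split.
  by apply/subsetP => l; rewrite !inE => hl; exact: rb_trans hl hji.
by exists j; rewrite !inE ?hji // rb_irr.
Qed.

Lemma rb_total n (v : 'I_n -> R) i j : i != j ->
  ranked_before v j i || ranked_before v i j.
Proof.
move=> ne; rewrite /ranked_before.
case: (ltgtP `|v i| `|v j|) => //= e.
case: (ltngtP j i) => // h.
by move: ne; rewrite (val_inj h) eqxx.
Qed.

Lemma rank_inj n (v : 'I_n -> R) : injective (rank v).
Proof.
move=> i j e; apply/eqP; apply/negPn/negP => ne.
case/orP: (rb_total v ne) => /(rank_lt) h; by rewrite e ltnn in h.
Qed.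

Lemma rank_ltn n (v : 'I_n -> R) i : (rank v i < n)%N.
Proof.
rewrite /rank -[X in (_ < X)%N]card_ord -cardsT; apply: proper_card.
apply/properP; split; first exact: subsetT.
by exists i; rewrite !inE ?rb_irr.
Qed.

Definition topset n (v : 'I_n -> R) k := [set i | (rank v i < k)%N].

Lemma card_topset n (v w : 'I_n -> R) k : #|topset v k| = #|topset w k|.
Proof.
pose f (u : 'I_n -> R) i := Ordinal (rank_ltn u i).
have finj u : injective (f u).
  by move=> i j /(congr1 val) /= /rank_inj.
have -> : topset v k = f v @^-1: [set j : 'I_n | (j < k)%N].
  by apply/setP => i; rewrite !inE.
have -> : topset w k = f w @^-1: [set j : 'I_n | (j < k)%N].
  by apply/setP => i; rewrite !inE.
by rewrite !card_preimset.
Qed.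

Lemma max_sum n (a : 'I_n -> R) (S T : {set 'I_n}) :
  #|T| = #|S| -> (forall i j, i \in S -> j \notin S -> a j <= a i) ->
  \sum_(i in T) a i <= \sum_(i in S) a i.
Proof.
move=> eT hS.
rewrite [X in X <= _](big_setID S) [X in _ <= X](big_setID T) /= setIC lerD2l.
set A := S :\: T; set C := T :\: S.
have eC : #|C| = #|A|.
  by rewrite /A /C !cardsD eT setIC.
have H : 0 <= \sum_(i in A) \sum_(j in C) (a i - a j).
  apply: sumr_ge0 => i; rewrite inE => /andP[_ iS]; apply: sumr_ge0 => j.
  rewrite inE => /andP[jS _]; rewrite subr_ge0; exact: hS.
have E : \sum_(i in A) \sum_(j in C) (a i - a j) =
   (#|A|%:R) * (\sum_(i in A) a i - \sum_(j in C) a j).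
  rewrite (eq_bigr (fun i => #|A|%:R * a i - \sum_(j in C) a j)); last first.
    by move=> i _; rewrite sumrB sumr_const mulr_natl eC.
  by rewrite sumrB -mulr_sumr sumr_const mulrBr; congr (_ - _); rewrite mulr_natl.
rewrite E in H.
case: (posnP #|A|) => hA.
  have A0 : A = set0 by apply/cards0_eq.
  have C0 : C = set0 by apply/cards0_eq; rewrite eC.
  by rewrite A0 C0 !big_set0.
by rewrite -subr_ge0; move: H; rewrite pmulr_rge0 // ltr0n.
Qed.

Lemma block_ineq n k (x y : 'I_n -> R) :
  \sum_(i in topset x k) `|x i| - \sum_(i in topset y k) `|x i|
  <= 2 * \sum_i `|x i - y i|.
Proof.
set Sx := topset x k; set Sy := topset y k.
have h1 : \sum_(i in Sx) `|x i| <= \sum_(i in Sx) `|y i| + \sum_(i in Sx) `|x i - y i|.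
  rewrite -big_split /=; apply: ler_sum => i _.
  by have := ler_normD (y i) (x i - y i); rewrite addrCA subrr addr0.
have h2 : \sum_(i in Sy) `|y i| <= \sum_(i in Sy) `|x i| + \sum_(i in Sy) `|x i - y i|.
  rewrite -big_split /=; apply: ler_sum => i _.
  by have := ler_normD (x i) (y i - x i); rewrite addrCA subrr addr0 distrC.
have h3 : \sum_(i in Sx) `|y i| <= \sum_(i in Sy) `|y i|.
  apply: max_sum; first exact: card_topset.
  move=> i j; rewrite !inE -leqNgt => hi hj.
  rewrite leNgt; apply/negP => hlt.
  have : ranked_before y j i by rewrite /ranked_before hlt.
  move/rank_lt => h; move: (leq_ltn_trans hj (ltn_trans h hi)); by rewrite ltnn.
have h4 : \sum_(i in Sx) `|x i - y i| <= \sum_i `|x i - y i|.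
  rewrite [X in _ <= X](bigID (fun i => i \in Sx)) /= lerDl; exact: sumr_ge0.
have h5 : \sum_(i in Sy) `|x i - y i| <= \sum_i `|x i - y i|.
  rewrite [X in _ <= X](bigID (fun i => i \in Sy)) /= lerDl; exact: sumr_ge0.
lra.
Qed.

Lemma sig_sum B (d : 'I_B -> nat) (G : bcoord d -> R) :
  \sum_(p : bcoord d) G p = \sum_(k : 'I_B) \sum_(i : 'I_(d k)) G (Tagged (fun k => 'I_(d k)) i).
Proof.
rewrite (sig_big_dep xpredT (fun k => xpredT)
  (fun k (i : 'I_(d k)) => G (Tagged (fun k => 'I_(d k)) i))) /=.
by apply: eq_bigr => -[k i].
Qed.

Lemma blk_sum B (d : 'I_B -> nat) (alpha : R) (x z : bcoord d -> R) :
  norm1 (hadamard x (FLT alpha z)) =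
  \sum_(k : 'I_B) \sum_(i in topset (block z k) (nkeep alpha (d k))) `|block x k i|.
Proof.
rewrite /norm1 sig_sum; apply: eq_bigr => k _.
rewrite [RHS]big_mkcond /=; apply: eq_bigr => i _.
rewrite /hadamard /FLT /topset inE /=.
by case: (_ < _)%N; rewrite ?mulr1 ?mulr0 ?normr0.
Qed.
End S.

Theorem lemma1 (R : archiRealFieldType) (B : nat) (d : 'I_B -> nat) (alpha : R)
  (halpha0 : 0 < alpha) (halpha1 : alpha <= 1) (x y : bcoord d -> R) :
  norm1 (hadamard x (FLT alpha x)) - norm1 (hadamard x (FLT alpha y))
  <= 2 * norm1 (fun p => x p - y p).
Proof.
rewrite !blk_sum /norm1 sig_sum -sumrB mulr_sumr; apply: ler_sum => k _.
exact: (block_ineq (nkeep alpha (d k)) (block x k) (block y k)).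
Qed.
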